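(* Let $D\subseteq\mathbb{R}^n$ be nonempty, convex, closed and bounded, and let $f:\mathbb{R}^n\to\mathbb{R}$ be continuously differentiable. Let $\{x^k\}$ be generated by Method (CGMS) (described in the context) and suppose the method does not terminate, so that $\{x^k\}$ is infinite. Then: (i) the sequence $\{x^k\}$ has a limit point which belongs to $D^0$; (ii) if, in addition, $f$ is pseudo-convex on $D$, then all limit points of $\{x^k\}$ belong to $D^*$, and $\lim_{k\to\infty} f(x^k)=f^*$.
   Context: Notation: $f'(x)$ is the gradient of $f$; $\langle\cdot,\cdot\rangle$ the Euclidean inner product. The problem is $\min_{x\in D} f(x)$; $f^*=\inf_{x\in D}f(x)$ and $D^*$ is its solution set. $D^0$ is the set of stationary points, i.e. of $x^*\in D$ with $\langle f'(x^* ),x-x^*\rangle\ge 0$ for all $x\in D$. $Z(x)$ denotes the set of minimizers of $y\mapsto\langle f'(x),y\rangle$ over $y\in D$. A differentiable $\varphi$ is pseudo-convex on $D$ if for all $x,y\in D$, $\langle\varphi'(x),y-x\rangle\ge0$ implies $\varphi(y)\ge\varphi(x)$. Method (CGMS): Choose $x^0\in D$, $\beta\in(0,1)$, and a sequence of numbers $\tau_l\in(0,1)$, $l=0,1,\dots$, with $\tau_l\to0$. Set $k=0$, $l=0$ and choose $\lambda_0\in(0,\tau_0]$. Iteration $k$: (Step 1) find $y^k\in Z(x^k)$, set $d^k=y^k-x^k$; if $\langle f'(x^k),d^k\rangle=0$, stop. (Step 2) Set $x^{k+1}=x^k+\lambda_k d^k$. If $f(x^{k+1})\le f(x^k)+\beta\lambda_k\langle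 f'(x^k),d^k\rangle$, choose any $\lambda_{k+1}\in[\lambda_k,\tau_l]$ (with $l$ unchanged). Otherwise set $\lambda'_{k+1}=\min\{\lambda_k,\tau_{l+1}\}$, replace $l$ by $l+1$, and choose any $\lambda_{k+1}\in(0,\lambda'_{k+1}]$. Set $k=k+1$ and return to Step 1. *)

(* Defs.v *)
From Stdlib Require Import Reals.
From mathcomp Require Import ssreflect ssrfun ssrbool eqtype ssrnat seq fintype bigop.

Set Implicit Arguments. Unset Strict Implicit. Unset Printing Implicit Defensive.

Open Scope R_scope.

Definition vec (n : nat) := 'I_n -> R.

Definition vadd {n} (x y : vec n) : vec n := fun i => x i + y i.
Definition vsub {n} (x y : vec n) : vec n := fun i => x i - y i.
Definition vscale {n} (a : R) (x : vec n) : vec n := fun i => a * x i.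

Definition inner {n} (x y : vec n) : R := \big[Rplus/0]_(i < n) (x i * y i).
Definition vnorm {n} (x : vec n) : R := sqrt (inner x x).

Definition vconvex {n} (D : vec n -> Prop) : Prop :=
  forall x y t, D x -> D y -> 0 <= t <= 1 -> D (vadd x (vscale t (vsub y x))).

Definition vclosed {n} (D : vec n -> Prop) : Prop :=
  forall x, ~ D x -> exists eps, 0 < eps /\ forall y, vnorm (vsub y x) < eps -> ~ D y.

Definition vbounded {n} (D : vec n -> Prop) : Prop :=
  exists M, forall x, D x -> vnorm x <= M.

Definition has_gradient {n} (f : vec n -> R) (g : vec n -> vec n) : Prop :=
  forall x eps, 0 < eps -> exists delta, 0 < delta /\
    forall y, vnorm (vsub y x) < delta ->
      Rabs (f y - f x - inner (g x) (vsub y x)) <= eps * vnorm (vsub y x).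

Definition continuous_map {n} (g : vec n -> vec n) : Prop :=
  forall x eps, 0 < eps -> exists delta, 0 < delta /\
    forall y, vnorm (vsub y x) < delta -> vnorm (vsub (g y) (g x)) < eps.

Definition C1_with_gradient {n} (f : vec n -> R) (f' : vec n -> vec n) : Prop :=
  has_gradient f f' /\ continuous_map f'.

Definition in_Z {n} (D : vec n -> Prop) (f' : vec n -> vec n) (x y : vec n) : Prop :=
  D y /\ forall z, D z -> inner (f' x) y <= inner (f' x) z.

(* D^0: stationary points *)
Definition stationary {n} (D : vec n -> Prop) (f' : vec n -> vec n) (xs : vec n) : Prop :=
  D xs /\ forall z, D z -> 0 <= inner (f' xs) (vsub z xs).

(* D^*: solution set *)
Definition minimizer {n} (D : vec n -> Prop) (f : vec n -> R) (xs : vec n) : Prop :=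
  D xs /\ forall z, D z -> f xs <= f z.

Definition is_inf_on {n} (D : vec n -> Prop) (f : vec n -> R) (m : R) : Prop :=
  (forall z, D z -> m <= f z) /\
  (forall m', (forall z, D z -> m' <= f z) -> m' <= m).

Definition pseudo_convex_on {n} (D : vec n -> Prop) (phi : vec n -> R)
    (phi' : vec n -> vec n) : Prop :=
  forall x y, D x -> D y -> 0 <= inner (phi' x) (vsub y x) -> phi x <= phi y.

Definition limit_point {n} (x : nat -> vec n) (xs : vec n) : Prop :=
  forall eps, 0 < eps -> forall N, exists k, (N <= k)%nat /\ vnorm (vsub (x k) xs) < eps.

(* The sequences (x^k, y^k, lambda_k, l_k) are a non-terminating run of Method CGMS
   with parameters beta, tau; lidx k is the value of the counter l at the start of
   iteration k. *)
Definition CGMS_run {n} (D : vec n -> Prop) (f : vec n -> R) (f' : vec n -> vec n)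
    (beta : R) (tau : nat -> R)
    (x y : nat -> vec n) (lam : nat -> R) (lidx : nat -> nat) : Prop :=
  D (x 0%nat) /\ lidx 0%nat = 0%nat /\ 0 < lam 0%nat <= tau 0%nat /\
  forall k,
    let d := vsub (y k) (x k) in
    in_Z D f' (x k) (y k) /\
    inner (f' (x k)) d <> 0 /\
    x (S k) = vadd (x k) (vscale (lam k) d) /\
    (f (x (S k)) <= f (x k) + beta * lam k * inner (f' (x k)) d ->
       lidx (S k) = lidx k /\ lam k <= lam (S k) <= tau (lidx k)) /\
    (~ (f (x (S k)) <= f (x k) + beta * lam k * inner (f' (x k)) d) ->
       lidx (S k) = S (lidx k) /\
       0 < lam (S k) <= Rmin (lam k) (tau (S (lidx k)))).

(* Main.v *)
Set Warnings "-notation-overridden".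
Require Import Defs.
Set Warnings "-redundant-canonical-projection".
From HB Require Import structures.
From Stdlib Require Import Reals Lra MVT Rtopology FunctionalExtensionality ClassicalEpsilon Classical.
From mathcomp Require Import ssreflect ssrfun ssrbool eqtype ssrnat seq fintype bigop.
From mathcomp Require Import zify.

Open Scope R_scope.

HB.instance Definition _ := Monoid.isComLaw.Build R 0 Rplus (fun a b c => esym (Rplus_assoc a b c)) Rplus_comm Rplus_0_l.

Lemma sum_recr n (F : 'I_n.+1 -> R) : \big[Rplus/0]_(i < n.+1) F i =
  \big[Rplus/0]_(i < n) F (widen_ord (leqnSn n) i) + F ord_max.
Proof. by rewrite big_ord_recr. Qed.

Lemma sumD n (F G : 'I_n -> R) :
  \big[Rplus/0]_(i < n) (F i + G i) = \big[Rplus/0]_(i < n) F i + \big[Rplus/0]_(i < n) G i.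
Proof. by rewrite big_split. Qed.

Lemma sumZ n a (F : 'I_n -> R) :
  \big[Rplus/0]_(i < n) (a * F i) = a * \big[Rplus/0]_(i < n) F i.
Proof.
elim: n F => [|n IH] F.
  rewrite !big_ord0 /=; ring.
by rewrite !sum_recr IH Rmult_plus_distr_l.
Qed.

Lemma sum_le n (F G : 'I_n -> R) : (forall i, F i <= G i) ->
  \big[Rplus/0]_(i < n) F i <= \big[Rplus/0]_(i < n) G i.
Proof.
move=> H; apply: (big_ind2 (fun a b => a <= b)); [lra| move=> *; lra| move=> i _; exact: H].
Qed.

Lemma sum_const n a : \big[Rplus/0]_(i < n) a = INR n * a.
Proof.
elim: n => [|n IH]; first by rewrite big_ord0 /=; ring.
rewrite sum_recr IH S_INR; ring.
Qed.

Lemma sum_ge_term n (F : 'I_n -> R) j : (forall i, 0 <= F i) -> F j <= \big[Rplus/0]_(i < n) F i.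
Proof.
move=> H; rewrite (bigD1 j) //=.
change (F j <= F j + \big[Rplus/0]_(i < n | i != j) F i).
have: 0 <= \big[Rplus/0]_(i < n | i != j) F i.
  apply: (big_ind (fun a => 0 <= a)); [lra| move=> *; lra| move=> i _; exact: H].
move: (H j); lra.
Qed.

Section V.
Context {n : nat}.
Implicit Types u v w : vec n.

Lemma inner_comm u v : inner u v = inner v u.
Proof. rewrite /inner; apply: eq_bigr => i _; ring. Qed.

Lemma inner_addl u v w : inner (vadd u v) w = inner u w + inner v w.
Proof. rewrite /inner -sumD; apply: eq_bigr => i _; rewrite /vadd; ring. Qed.

Lemma inner_subl u v w : inner (vsub u v) w = inner u w - inner v w.
Proof.
rewrite /inner; transitivity (\big[Rplus/0]_(i < n) (u i * w i) +
  \big[Rplus/0]_(i < n) (-1 * (v i * w i))).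
  rewrite -sumD; apply: eq_bigr => i _; rewrite /vsub; ring.
rewrite sumZ; ring.
Qed.

Lemma inner_scalel a u w : inner (vscale a u) w = a * inner u w.
Proof. rewrite /inner -sumZ; apply: eq_bigr => i _; rewrite /vscale; ring. Qed.

Lemma inner_addr u v w : inner w (vadd u v) = inner w u + inner w v.
Proof. by rewrite inner_comm inner_addl !(inner_comm w). Qed.
Lemma inner_subr u v w : inner w (vsub u v) = inner w u - inner w v.
Proof. by rewrite inner_comm inner_subl !(inner_comm w). Qed.
Lemma inner_scaler a u w : inner w (vscale a u) = a * inner w u.
Proof. by rewrite inner_comm inner_scalel !(inner_comm w). Qed.

Lemma inner_ge0 u : 0 <= inner u u.
Proof.
rewrite /inner; apply: (big_ind (fun a => 0 <= a)); [lra| move=> *; lra| move=> i _].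
apply: Rle_0_sqr.
Qed.

Lemma coord_sq_le u i : u i * u i <= inner u u.
Proof. apply: (@sum_ge_term n (fun i => u i * u i) i) => j; apply: Rle_0_sqr. Qed.

Lemma vnorm_ge0 u : 0 <= vnorm u.
Proof. apply: sqrt_pos. Qed.

Lemma vnorm_sq u : vnorm u * vnorm u = inner u u.
Proof. apply: sqrt_sqrt; apply: inner_ge0. Qed.

Lemma coord_le u i : Rabs (u i) <= vnorm u.
Proof.
rewrite /vnorm -sqrt_Rsqr_abs; apply: sqrt_le_1_alt.
rewrite /Rsqr; apply: coord_sq_le.
Qed.

Lemma inner_zero u v : inner v v = 0 -> inner u v = 0.
Proof.
move=> H; rewrite /inner (eq_bigr (fun _ => 0)); last first.
  move=> i _; have := coord_sq_le v i; rewrite H => Hi.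
  have : v i = 0 by nra.
  by move=> ->; ring.
by rewrite sum_const; ring.
Qed.

Lemma CS u v : Rabs (inner u v) <= vnorm u * vnorm v.
Proof.
have Hsq : inner u v * inner u v <= inner u u * inner v v.
  case: (Req_dec (inner v v) 0) => Hv.
    rewrite (inner_zero u v Hv) Hv; lra.
  have Hv' : 0 < inner v v by have := inner_ge0 v; lra.
  set t := inner u v / inner v v.
  have := inner_ge0 (vsub u (vscale t v)).
  rewrite !inner_subl !inner_subr !inner_scalel !inner_scaler (inner_comm v u).
  rewrite /t => H.
  move: H; set a := inner u u; set b := inner u v; set c := inner v v => H.
  have Hc : c <> 0 by rewrite /c; lra.
  have E : a * c - b * b = c * (a - b / c * b - (b / c * b - b / c * (b / c * c))) by field.
  have : 0 <= c * (a - b / c * b - (b / c * b - b / c * (b / c * c))).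
    apply: Rmult_le_pos; [rewrite /c; lra | lra].
  lra.
apply: Rsqr_incr_0_var; last by apply: Rmult_le_pos; apply: vnorm_ge0.
rewrite /Rsqr -Rabs_mult Rabs_right; last by apply: Rle_ge; nra.
have h1 := vnorm_sq u; have h2 := vnorm_sq v.
have -> : vnorm u * vnorm v * (vnorm u * vnorm v) = (vnorm u * vnorm u) * (vnorm v * vnorm v) by ring.
by rewrite h1 h2.
Qed.

Lemma vnorm_triangle u v : vnorm (vadd u v) <= vnorm u + vnorm v.
Proof.
apply: Rsqr_incr_0_var; last by have := vnorm_ge0 u; have := vnorm_ge0 v; lra.
rewrite /Rsqr vnorm_sq inner_addl !inner_addr (inner_comm v u).
have := CS u v; have := Rle_abs (inner u v).
have h1 := vnorm_sq u; have h2 := vnorm_sq v. nra.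
Qed.

Lemma vnorm_scale a u : vnorm (vscale a u) = Rabs a * vnorm u.
Proof.
rewrite /vnorm inner_scalel inner_scaler -Rmult_assoc -sqrt_Rsqr_abs -sqrt_mult;
  try (apply: Rle_0_sqr || apply: inner_ge0).
by rewrite /Rsqr.
Qed.

Lemma vsub_sym u v : vnorm (vsub u v) = vnorm (vsub v u).
Proof.
have -> : vsub u v = vscale (-1) (vsub v u).
  apply: functional_extensionality => i; rewrite /vsub /vscale; ring.
rewrite vnorm_scale Rabs_Ropp Rabs_R1; ring.
Qed.

Lemma vnorm_sub_le u v : vnorm (vsub u v) <= vnorm u + vnorm v.
Proof.
have -> : vsub u v = vadd u (vscale (-1) v).
  apply: functional_extensionality => i; rewrite /vsub /vadd /vscale; ring.
apply: Rle_trans (vnorm_triangle _ _) _.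
rewrite vnorm_scale Rabs_Ropp Rabs_R1; lra.
Qed.

Lemma vnorm_sub_tri u v w : vnorm (vsub u w) <= vnorm (vsub u v) + vnorm (vsub v w).
Proof.
have -> : vsub u w = vadd (vsub u v) (vsub v w).
  apply: functional_extensionality => i; rewrite /vsub /vadd; ring.
apply: vnorm_triangle.
Qed.

Lemma vnorm_coord_small u e : 0 <= e -> (forall i, Rabs (u i) <= e) ->
  vnorm u <= sqrt (INR n * (e * e)).
Proof.
move=> He H; apply: sqrt_le_1_alt; rewrite -sum_const /inner.
apply: sum_le => i.
have := H i; have := Rabs_pos (u i) => h1 h2.
apply: Rle_trans (Rle_abs _) _.
rewrite Rabs_mult. by apply: Rmult_le_compat.
Qed.

End V.

Definition vconv {n} (s : nat -> vec n) (l : vec n) := forall eps, 0 < eps ->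
  exists N, forall j, (N <= j)%N -> vnorm (vsub (s j) l) < eps.
Definition cv1 (u : nat -> R) (l : R) := forall eps, 0 < eps ->
  exists N, forall j, (N <= j)%N -> Rabs (u j - l) < eps.
Definition incr (phi : nat -> nat) := forall j, (phi j < phi j.+1)%N.

Lemma incr_ge {phi} : incr phi -> forall j, (j <= phi j)%N.
Proof. move=> H; elim=> [|j IH] //; have := H j; lia. Qed.

Lemma incr_mono {phi} : incr phi -> forall i j, (i <= j)%N -> (phi i <= phi j)%N.
Proof.
move=> H i j; elim: j => [|j IH]; first by case: i.
rewrite leq_eqVlt => /orP [/eqP -> //|]; rewrite ltnS => /IH; have := H j; lia.
Qed.

Lemma incr_comp phi psi : incr phi -> incr psi -> incr (fun j => phi (psi j)).
Proof.
move=> H1 H2 j; have := incr_mono H1 _ _ (H2 j).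
have := H1 (psi j); lia.
Qed.

Lemma extract (P : nat -> nat -> Prop) :
  (forall j N, exists p, (N <= p)%N /\ P j p) ->
  exists phi, incr phi /\ forall j, P j (phi j).
Proof.
move=> H.
have c : forall j N, {p | (N <= p)%N /\ P j p} :=
  fun j N => constructive_indefinite_description _ (H j N).
pose fix phi j := match j with 0 => sval (c 0%N 0%N) | S j' => sval (c (S j') (S (phi j'))) end.
exists phi; split.
  move=> j; rewrite /=; by case: (svalP (c j.+1 (phi j).+1)).
case=> [|j] /=; [exact: (proj2 (svalP (c 0%N 0%N))) | exact: (proj2 (svalP (c j.+1 _)))].
Qed.

Lemma small_inv eps : 0 < eps -> exists N, forall j, (N <= j)%N -> / (INR j + 1) < eps.
Proof.
move=> He; have [N [HN HN0]] := archimed_cor1 eps He.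
exists N => j Hj; apply: Rle_lt_trans HN.
apply: Rinv_le_contravar; first exact: lt_0_INR.
have : INR N <= INR j by apply: le_INR; apply/leP.
lra.
Qed.

Lemma inv_pos j : 0 < / (INR j + 1).
Proof. apply: Rinv_0_lt_compat; have := pos_INR j; lra. Qed.

Lemma BW1 (a : nat -> R) M : (forall j, Rabs (a j) <= M) ->
  exists phi c, incr phi /\ cv1 (fun j => a (phi j)) c.
Proof.
move=> HM.
have [l Hl] : exists l, ValAdh a l.
  apply: (Bolzano_Weierstrass a (fun c => -M <= c <= M)); first exact: compact_P3.
  move=> j; have := HM j; have := Rle_abs (a j); have := Rabs_Ropp (a j); have := Rle_abs (- a j); lra.
have : forall j N, exists p, (N <= p)%N /\ Rabs (a p - l) < / (INR j + 1).
  move=> j N.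
  have Hn : neighbourhood (fun r => Rabs (r - l) < / (INR j + 1)) l.
    by exists (mkposreal _ (inv_pos j)) => y; rewrite /disc /=.
  have [p [Hp1 Hp2]] := Hl _ N Hn.
  by exists p; split => //; apply/leP.
move=> /extract [phi [Hphi HP]].
exists phi, l; split => // eps He.
have [N HN] := small_inv eps He.
exists N => j Hj; apply: Rlt_trans (HP j) (HN j Hj).
Qed.

Lemma vconv_coord n (s : nat -> vec n) (l : vec n) :
  (forall eps, 0 < eps -> exists N, forall j, (N <= j)%N -> forall i, Rabs (s j i - l i) < eps) ->
  vconv s l.
Proof.
move=> H eps He.
set e := eps / (INR n + 1).
have Hn := pos_INR n.
have He' : 0 < e by rewrite /e; apply: Rdiv_lt_0_compat; lra.
have [N HN] := H e He'.
exists N => j Hj.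
apply: Rle_lt_trans (@vnorm_coord_small n (vsub (s j) l) e _ _) _; first lra.
  move=> i; rewrite /vsub; apply: Rlt_le; exact: HN.
rewrite -(sqrt_square eps); last lra.
apply: sqrt_lt_1_alt; split; first by apply: Rmult_le_pos => //; nra.
have Ee : (INR n + 1) * e = eps by rewrite /e; field; lra.
have : e <= eps.
  rewrite -Ee; nra.
nra.
Qed.

Lemma BW n (s : nat -> vec n) M : (forall j, vnorm (s j) <= M) ->
  exists phi l, incr phi /\ vconv (fun j => s (phi j)) l.
Proof.
move=> HM.
suff : forall m, exists phi (l : vec n), incr phi /\ forall eps, 0 < eps -> exists N,
    forall j, (N <= j)%N -> forall i : 'I_n, (i < m)%N -> Rabs (s (phi j) i - l i) < eps.
  move=> /(_ n) [phi [l [Hphi Hl]]]; exists phi, l; split => //.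
  apply: vconv_coord => eps /Hl [N HN]; exists N => j Hj i; exact: HN.
elim=> [|m [phi [l [Hphi Hl]]]].
  exists id, (s 0%N); split => // eps _; exists 0%N => j _ i; by [].
case: (ltnP m n) => Hmn; last first.
  exists phi, l; split => // eps /Hl [N HN]; exists N => j Hj i Hi; apply: HN => //.
  have := ltn_ord i; lia.
pose i0 := Ordinal Hmn.
have [psi [c [Hpsi Hc]]] := @BW1 (fun j => s (phi j) i0) M
  (fun j => Rle_trans _ _ _ (coord_le _ i0) (HM _)).
exists (fun j => phi (psi j)), (fun i => if nat_of_ord i == m then c else l i).
split; first exact: incr_comp.
move=> eps He; have [N1 HN1] := Hl eps He; have [N2 HN2] := Hc eps He.
exists (maxn N1 N2) => j Hj i Hi.
case: eqP => Him.
  have -> : i = i0 by apply: ord_inj.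
  apply: HN2; lia.
apply: HN1; last lia.
have := incr_ge Hpsi j; lia.
Qed.

Lemma closed_lim {n} {D : vec n -> Prop} {s l} : vclosed D -> (forall j, D (s j)) -> vconv s l -> D l.
Proof.
move=> HD Hs Hl; apply: NNPP => Hn.
have [eps [He Hb]] := HD l Hn.
have [N HN] := Hl eps He.
exact: (Hb (s N) (HN N (leqnn N)) (Hs N)).
Qed.

Lemma choice_nat {A : Type} {P : nat -> A -> Prop} :
  (forall j, exists a, P j a) -> exists F, forall j, P j (F j).
Proof.
move=> H; exists (fun j => proj1_sig (constructive_indefinite_description _ (H j))).
move=> j; exact: (proj2_sig (constructive_indefinite_description _ (H j))).
Qed.

Lemma Rabs_triang3 a b c : Rabs (a - c) <= Rabs (a - b) + Rabs (b - c).
Proof.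
have -> : a - c = (a - b) + (b - c) by ring.
apply: Rabs_triang.
Qed.

Section A.
Variable n : nat.
Variable D : vec n -> Prop.
Variable f : vec n -> R.
Variable g : vec n -> vec n.
Variable M : R.
Hypothesis HDconv : vconvex D.
Hypothesis HDcl : vclosed D.
Hypothesis HDb : forall z, D z -> vnorm z <= M.
Hypothesis Hgrad : has_gradient f g.
Hypothesis Hgc : continuous_map g.

Lemma f_cont (x : vec n) eps : 0 < eps -> exists delta, 0 < delta /\
  forall y, vnorm (vsub y x) < delta -> Rabs (f y - f x) < eps.
Proof.
move=> He; have [d1 [Hd1 H1]] := Hgrad x 1 Rlt_0_1.
have Hg := vnorm_ge0 (g x).
exists (Rmin d1 (eps / (vnorm (g x) + 1))); split.
  apply: Rmin_pos => //; apply: Rdiv_lt_0_compat; lra.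
move=> y Hy.
have Hy1 : vnorm (vsub y x) < d1 by apply: Rlt_le_trans Hy (Rmin_l _ _).
have Hy2 : vnorm (vsub y x) < eps / (vnorm (g x) + 1) by apply: Rlt_le_trans Hy (Rmin_r _ _).
have := H1 y Hy1; have := CS (g x) (vsub y x).
have Hv := vnorm_ge0 (vsub y x).
have : (vnorm (g x) + 1) * vnorm (vsub y x) < eps.
  have E : eps = (vnorm (g x) + 1) * (eps / (vnorm (g x) + 1)) by field; lra.
  rewrite [X in _ < X]E; apply: Rmult_lt_compat_l => //; lra.
set a := f y - f x; set b := inner (g x) (vsub y x).
move=> h1 h2 h3.
have : Rabs a <= Rabs (a - b) + Rabs b.
  have -> : a = (a - b) + b by ring.
  apply: Rle_trans (Rabs_triang _ _) _. have -> : a - b + b - b = a - b by ring. lra.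
nra.
Qed.

Lemma seg_eq (x d : vec n) t h :
  vsub (vadd x (vscale (t + h) d)) (vadd x (vscale t d)) = vscale h d.
Proof. apply: functional_extensionality => i; rewrite /vsub /vadd /vscale; ring. Qed.

Lemma deriv_seg (x d : vec n) t :
  derivable_pt_lim (fun t => f (vadd x (vscale t d))) t (inner (g (vadd x (vscale t d))) d).
Proof.
move=> eps He.
set p := vadd x (vscale t d).
have Hd := vnorm_ge0 d.
have He' : 0 < eps / 2 / (vnorm d + 1) by apply: Rdiv_lt_0_compat; lra.
have [del [Hdel H]] := Hgrad p _ He'.
have Hpos : 0 < del / (vnorm d + 1) by apply: Rdiv_lt_0_compat; lra.
exists (mkposreal _ Hpos) => h Hh0 /= Hh.
have := H (vadd x (vscale (t + h) d)).
rewrite /p seg_eq vnorm_scale inner_scaler.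
have Hha : 0 < Rabs h by apply: Rabs_pos_lt.
have : Rabs h * vnorm d < del.
  have : Rabs h * (vnorm d + 1) < del.
    have E : del = del / (vnorm d + 1) * (vnorm d + 1) by field; lra.
    rewrite [X in _ < X]E; apply: Rmult_lt_compat_r => //; lra.
  nra.
move=> Hlt /(_ Hlt).
set A := f _ - f _; set L := inner _ d.
move=> HA.
have -> : (f (vadd x (vscale (t + h) d)) - f (vadd x (vscale t d))) / h - L = (A - h * L) / h.
  rewrite /A; field; exact: Hh0.
rewrite /Rdiv Rabs_mult Rabs_inv.
apply: (Rmult_lt_reg_r (Rabs h)) => //.
have -> : Rabs (A - h * L) * / Rabs h * Rabs h = Rabs (A - h * L) by field; lra.
apply: Rle_lt_trans HA _.
have : eps / 2 / (vnorm d + 1) * (Rabs h * vnorm d) <= eps / 2 * Rabs h.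
  have -> : eps / 2 / (vnorm d + 1) * (Rabs h * vnorm d) = eps / 2 * Rabs h * (vnorm d / (vnorm d + 1)) by field; lra.
  have : vnorm d / (vnorm d + 1) <= 1.
    apply: (Rmult_le_reg_r (vnorm d + 1)); first lra.
    have -> : vnorm d / (vnorm d + 1) * (vnorm d + 1) = vnorm d by field; lra.
    lra.
  move=> Hq; rewrite -[X in _ <= X]Rmult_1_r; apply: Rmult_le_compat_l => //.
  apply: Rmult_le_pos; lra.
have : 0 < eps * Rabs h by apply: Rmult_lt_0_compat.
lra.
Qed.

Lemma mvt_seg (x d : vec n) lam : 0 < lam -> exists t, 0 < t < lam /\
  f (vadd x (vscale lam d)) - f x = lam * inner (g (vadd x (vscale t d))) d.
Proof.
move=> Hl.
have [c [Hc1 Hc2]] := MVT_cor2 (fun t => f (vadd x (vscale t d)))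
  (fun t => inner (g (vadd x (vscale t d))) d) 0 lam Hl (fun c _ => deriv_seg x d c).
exists c; split => //.
have Ex : vadd x (vscale 0 d) = x.
  apply: functional_extensionality => i; rewrite /vadd /vscale; ring.
rewrite -{2}Ex Hc1; ring.
Qed.

Lemma seq_compact (s : nat -> vec n) : (forall j, D (s j)) ->
  exists phi l, incr phi /\ vconv (fun j => s (phi j)) l /\ D l.
Proof.
move=> Hs; have [phi [l [Hphi Hl]]] := @BW n s M (fun j => HDb _ (Hs j)).
exists phi, l; split => //; split => //.
exact: (@closed_lim n D _ l HDcl (fun j => Hs (phi j)) Hl).
Qed.


Lemma unif_cont_g eps : 0 < eps -> exists del, 0 < del /\ forall u v, D u -> D v ->
  vnorm (vsub u v) < del -> vnorm (vsub (g u) (g v)) < eps.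
Proof.
move=> He; apply: NNPP => Hn.
have H : forall j, exists p : vec n * vec n, D p.1 /\ D p.2 /\
    vnorm (vsub p.1 p.2) < / (INR j + 1) /\ eps <= vnorm (vsub (g p.1) (g p.2)).
  move=> j; apply: NNPP => Hj; apply: Hn; exists (/ (INR j + 1)); split; first exact: inv_pos.
  move=> u v Du Dv Huv; apply: Rnot_le_lt => Hle; apply: Hj; by exists (u, v).
have [F HF] := choice_nat H.
have [phi [l [Hphi [Hl Dl]]]] := seq_compact (fun j => (F j).1) (fun j => proj1 (HF j)).
have He2 : 0 < eps / 2 by lra.
have [d0 [Hd0 Hc]] := Hgc l (eps / 2) He2.
have Hd2 : 0 < d0 / 2 by lra.
have [N1 HN1] := Hl (d0 / 2) Hd2.
have [N2 HN2] := small_inv (d0 / 2) Hd2.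
pose j := maxn N1 N2.
have h1 : vnorm (vsub (F (phi j)).1 l) < d0 / 2 by apply: HN1; rewrite /j; lia.
have h2 : vnorm (vsub (F (phi j)).1 (F (phi j)).2) < d0 / 2.
  apply: Rlt_trans (HN2 (phi j) _); first by case: (HF (phi j)) => _ [_ []].
  have := incr_ge Hphi j; rewrite /j; lia.
have h3 := vnorm_sub_tri (F (phi j)).2 (F (phi j)).1 l.
rewrite (vsub_sym (F (phi j)).2 (F (phi j)).1) in h3.
have c1 : vnorm (vsub (g (F (phi j)).1) (g l)) < eps / 2 by apply: Hc; lra.
have c2 : vnorm (vsub (g (F (phi j)).2) (g l)) < eps / 2 by apply: Hc; lra.
have h4 := vnorm_sub_tri (g (F (phi j)).1) (g l) (g (F (phi j)).2).
rewrite (vsub_sym (g l)) in h4.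
case: (HF (phi j)) => _ [_ [_ h5]].
lra.
Qed.

Lemma inner_diff_bound (u l z : vec n) :
  Rabs (inner (g u) (vsub z u) - inner (g l) (vsub z l)) <=
  vnorm (vsub (g u) (g l)) * vnorm (vsub z u) + vnorm (g l) * vnorm (vsub u l).
Proof.
have -> : inner (g u) (vsub z u) - inner (g l) (vsub z l) =
   inner (vsub (g u) (g l)) (vsub z u) + inner (g l) (vsub l u).
  rewrite !inner_subl !inner_subr; ring.
apply: Rle_trans (Rabs_triang _ _) _.
rewrite (vsub_sym u l).
apply: Rplus_le_compat; exact: CS.
Qed.

Lemma stationary_lim (u : nat -> vec n) (e : nat -> R) l :
  (forall j, D (u j)) -> vconv u l -> cv1 e 0 ->
  (forall j z, D z -> - e j <= inner (g (u j)) (vsub z (u j))) -> stationary D g l.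
Proof.
move=> Du Hul He Hgap.
have Dl := closed_lim HDcl Du Hul.
split => // z Dz; apply: Rnot_lt_le => Hneg.
set c := - inner (g l) (vsub z l).
have Hc : 0 < c by rewrite /c; lra.
set K1 := 2 * Rabs M + 1.
have HK1 : 0 < K1 by have := Rabs_pos M; rewrite /K1; lra.
have Hgl := vnorm_ge0 (g l).
have He1 : 0 < c / (4 * K1) by apply: Rdiv_lt_0_compat; lra.
have [d [Hd Hcont]] := Hgc l _ He1.
have He2 : 0 < Rmin d (c / (4 * (vnorm (g l) + 1))).
  apply: Rmin_pos => //; apply: Rdiv_lt_0_compat; lra.
have [N1 HN1] := Hul _ He2.
have He3 : 0 < c / 4 by lra.
have [N2 HN2] := He _ He3.
pose j := maxn N1 N2.
have h1 := HN1 j (leq_maxl _ _).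
have h1a : vnorm (vsub (u j) l) < d by apply: Rlt_le_trans h1 (Rmin_l _ _).
have h1b : vnorm (vsub (u j) l) < c / (4 * (vnorm (g l) + 1)) by apply: Rlt_le_trans h1 (Rmin_r _ _).
have h2 := HN2 j (leq_maxr _ _).
rewrite Rminus_0_r in h2.
have h3 := Hcont _ h1a.
have h4 : vnorm (vsub z (u j)) <= K1.
  apply: Rle_trans (vnorm_sub_le _ _) _.
  have := HDb _ Dz; have := HDb _ (Du j); have := Rle_abs M; rewrite /K1; lra.
have h5 := inner_diff_bound (u j) l z.
have h6 := Hgap j z Dz.
have := Rle_abs (e j); have := Rle_abs (inner (g (u j)) (vsub z (u j)) - inner (g l) (vsub z l)).
have Hv1 := vnorm_ge0 (vsub (g (u j)) (g l)); have Hv2 := vnorm_ge0 (vsub z (u j)).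
have Hv3 := vnorm_ge0 (vsub (u j) l).
have E1 : c / (4 * K1) * K1 = c / 4 by field; lra.
have E2 : c / (4 * (vnorm (g l) + 1)) * (vnorm (g l) + 1) = c / 4 by field; lra.
have P1 : vnorm (vsub (g (u j)) (g l)) * vnorm (vsub z (u j)) <= c / 4.
  rewrite -E1; apply: Rmult_le_compat; lra.
have P2 : vnorm (g l) * vnorm (vsub (u j) l) <= c / 4.
  rewrite Rmult_comm -E2; apply: Rmult_le_compat; lra.
rewrite /c in P1 P2 h2 Hc. lra.
Qed.

Lemma vconv_limit_point (s : nat -> vec n) phi l :
  incr phi -> vconv (fun j => s (phi j)) l -> limit_point s l.
Proof.
move=> Hphi Hl eps He N0; have [N HN] := Hl eps He.
exists (phi (maxn N N0)); split; last by apply: HN; lia.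
have := incr_ge Hphi (maxn N N0); lia.
Qed.

Lemma limit_point_D (s : nat -> vec n) xs : (forall k, D (s k)) -> limit_point s xs -> D xs.
Proof.
move=> Ds Hxs.
have : forall j N, exists p, (N <= p)%N /\ vnorm (vsub (s p) xs) < / (INR j + 1).
  move=> j N; exact: (Hxs _ (inv_pos j) N).
move=> /extract [phi [Hphi HP]].
apply: (closed_lim HDcl (fun j => Ds (phi j))) => //.
move=> eps He; have [N HN] := small_inv eps He.
exists N => j Hj; apply: Rlt_trans (HP j) (HN j Hj).
Qed.

Lemma lim_point_val (s : nat -> vec n) xs L : (forall k, D (s k)) -> limit_point s xs ->
  cv1 (fun k => f (s k)) L -> D xs /\ f xs = L.
Proof.
move=> Ds Hxs HL; split; first exact: limit_point_D Ds Hxs.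
apply: NNPP => Hne.
have Hc : 0 < Rabs (f xs - L) / 2.
  apply: Rdiv_lt_0_compat; last lra; apply: Rabs_pos_lt; lra.
have [d [Hd Hcont]] := f_cont xs _ Hc.
have [N HN] := HL _ Hc.
have [k [Hk Hk2]] := Hxs d Hd N.
have h1 := Hcont _ Hk2; have h2 := HN k Hk.
have := Rabs_triang3 (f xs) (f (s k)) L.
rewrite Rabs_minus_sym in h1. lra.
Qed.

Lemma near_opt xm : pseudo_convex_on D f g -> minimizer D f xm ->
  forall eps, 0 < eps -> exists eta, 0 < eta /\ forall x, D x ->
   (forall z, D z -> - eta <= inner (g x) (vsub z x)) -> f x <= f xm + eps.
Proof.
move=> Hpc [Dxm Hxm] eps He; apply: NNPP => Hn.
have H : forall j, exists x, D x /\ (forall z, D z -> - / (INR j + 1) <= inner (g x) (vsub z x))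
    /\ f xm + eps < f x.
  move=> j; apply: NNPP => Hj; apply: Hn; exists (/ (INR j + 1)); split; first exact: inv_pos.
  move=> x Dx Hg; apply: Rnot_lt_le => Hlt; apply: Hj; by exists x.
have [F HF] := choice_nat H.
have [phi [l [Hphi [Hl Dl]]]] := seq_compact F (fun j => proj1 (HF j)).
have Hst : stationary D g l.
  apply: (@stationary_lim (fun j => F (phi j)) (fun j => / (INR (phi j) + 1)) l (fun j => proj1 (HF (phi j))) Hl).
    move=> eps' He'; have [N HN] := small_inv eps' He'.
    exists N => j Hj; rewrite Rminus_0_r Rabs_right; last by apply: Rle_ge; apply: Rlt_le; apply: inv_pos.
    apply: HN; have := incr_ge Hphi j; lia.
  by move=> j z Dz; case: (HF (phi j)) => _ [/(_ z Dz) h _].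
have Hfl : f l <= f xm by apply: Hpc => //; case: Hst => _; apply.
have [d [Hd Hcont]] := f_cont l _ He.
have [N HN] := Hl d Hd.
have h1 := Hcont _ (HN N (leqnn N)).
case: (HF (phi N)) => _ [_ h2].
have := Rle_abs (f (F (phi N)) - f l). lra.
Qed.

End A.
Arguments unif_cont_g {n D g M}.
Arguments mvt_seg {n f g}.
Arguments lim_point_val {n D f g}.
Arguments seq_compact {n D M}.
Arguments stationary_lim {n D g M}.
Arguments near_opt {n D f g M}.
Arguments f_cont {n f g}.
Arguments vconv_limit_point {n s phi l}.

Section B.
Variable n : nat.
Variable D : vec n -> Prop.
Variable f : vec n -> R.
Variable g : vec n -> vec n.
Variable beta : R.
Variable tau : nat -> R.
Variables (x y : nat -> vec n) (lam : nat -> R) (lidx : nat -> nat).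
Variable M : R.
Hypothesis HDconv : vconvex D.
Hypothesis HDcl : vclosed D.
Hypothesis HDb : forall z, D z -> vnorm z <= M.
Hypothesis Hgrad : has_gradient f g.
Hypothesis Hgc : continuous_map g.
Hypothesis Hbeta : 0 < beta < 1.
Hypothesis Htau : forall l, 0 < tau l < 1.
Hypothesis Htau0 : Un_cv tau 0.
Hypothesis Hrun : CGMS_run D f g beta tau x y lam lidx.

Definition th k := inner (g (x k)) (vsub (y k) (x k)).
Definition succ k := f (x k.+1) <= f (x k) + beta * lam k * th k.

Lemma run_step k : in_Z D g (x k) (y k) /\ th k <> 0 /\
  x k.+1 = vadd (x k) (vscale (lam k) (vsub (y k) (x k))) /\
  (succ k -> lidx k.+1 = lidx k /\ lam k <= lam k.+1 <= tau (lidx k)) /\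
  (~ succ k -> lidx k.+1 = (lidx k).+1 /\ 0 < lam k.+1 <= Rmin (lam k) (tau (lidx k).+1)).
Proof. case: Hrun => _ [_ [_ H]]; exact: H k. Qed.

Lemma run_inv k : D (x k) /\ 0 < lam k /\ lam k <= tau (lidx k).
Proof.
elim: k => [|k [Dk [Hl1 Hl2]]].
  case: Hrun => H0 [H1 [H2 _]]; rewrite H1; split => //; lra.
have [[Dy _] [_ [Hx [Hs Hf]]]] := run_step k.
have := Htau (lidx k); move=> Ht.
split.
  rewrite Hx; apply: HDconv => //; lra.
case: (classic (succ k)) => Hk.
  have [E [h1 h2]] := Hs Hk; rewrite E; split; lra.
have [E [h1 h2]] := Hf Hk; rewrite E; split => //.
apply: Rle_trans h2 (Rmin_r _ _).
Qed.

Lemma Dx k : D (x k). Proof. exact: (proj1 (run_inv k)). Qed.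
Lemma lam_pos k : 0 < lam k. Proof. exact: (proj1 (proj2 (run_inv k))). Qed.
Lemma lam_tau k : lam k <= tau (lidx k). Proof. exact: (proj2 (proj2 (run_inv k))). Qed.

Lemma th_gap k z : D z -> th k <= inner (g (x k)) (vsub z (x k)).
Proof.
move=> Dz; have [[_ HZ] _] := run_step k.
rewrite /th !inner_subr; have := HZ z Dz; lra.
Qed.

Lemma th_neg k : th k < 0.
Proof.
have := th_gap k (x k) (Dx k); rewrite inner_subr Rminus_diag.
have [_ [H _]] := run_step k; lra.
Qed.

Lemma lidx_mono k : (lidx k <= lidx k.+1)%N.
Proof.
have [_ [_ [_ [Hs Hf]]]] := run_step k.
case: (classic (succ k)) => Hk; first by rewrite (proj1 (Hs Hk)).
by rewrite (proj1 (Hf Hk)).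
Qed.

Lemma lidx_mono2 i j : (i <= j)%N -> (lidx i <= lidx j)%N.
Proof.
elim: j => [|j IH]; first by case: i.
rewrite leq_eqVlt => /orP [/eqP -> //|]; rewrite ltnS => /IH; have := lidx_mono j; lia.
Qed.

Definition Bd := 2 * Rabs M + 1.

Lemma Bd_pos : 0 < Bd.
Proof. have := Rabs_pos M; rewrite /Bd; lra. Qed.

Lemma d_bound k : vnorm (vsub (y k) (x k)) <= Bd.
Proof.
have [[Dy _] _] := run_step k.
apply: Rle_trans (vnorm_sub_le _ _) _.
have := HDb _ Dy; have := HDb _ (Dx k); have := Rle_abs M; rewrite /Bd; lra.
Qed.

Lemma step_bound eg : 0 < eg -> exists del, 0 < del /\ forall k, lam k < del ->
  f (x k.+1) <= f (x k) + lam k * eg * Bd /\ (~ succ k -> (1 - beta) * (- th k) <= eg * Bd).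
Proof.
move=> Heg; have [d0 [Hd0 Hu]] := unif_cont_g HDcl HDb Hgc _ Heg.
have HB := Bd_pos.
exists (d0 / Bd); split; first by apply: Rdiv_lt_0_compat.
move=> k Hk.
set d := vsub (y k) (x k).
have Hl := lam_pos k; have Hlt1 : lam k < 1 by have := lam_tau k; have := Htau (lidx k); lra.
have [t [Ht Hmvt]] := mvt_seg Hgrad (x k) d _ Hl.
have [[Dy _] [_ [Hx _]]] := run_step k.
set xi := vadd (x k) (vscale t d).
have Dxi : D xi by apply: HDconv => //; [exact: Dx | lra].
have Exi : vsub xi (x k) = vscale t d.
  apply: functional_extensionality => i; rewrite /xi /vsub /vadd /vscale; ring.
have Hdb : vnorm d <= Bd := d_bound k; have Hd0n := vnorm_ge0 d.
have Hclose : vnorm (vsub xi (x k)) < d0.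
  rewrite Exi vnorm_scale Rabs_right; last lra.
  have : lam k * Bd < d0.
    have E : d0 = d0 / Bd * Bd by field; lra.
    rewrite [X in _ < X]E; apply: Rmult_lt_compat_r => //.
  move=> h; apply: Rle_lt_trans h; apply: Rmult_le_compat; lra.
have HG := Hu _ _ Dxi (Dx k) Hclose.
have Hsplit : inner (g xi) d = th k + inner (vsub (g xi) (g (x k))) d.
  rewrite inner_subl /th -/d; ring.
have Hr : inner (vsub (g xi) (g (x k))) d <= eg * Bd.
  apply: Rle_trans (Rle_abs _) _; apply: Rle_trans (CS _ _) _.
  apply: Rmult_le_compat; [exact: vnorm_ge0 | exact: vnorm_ge0 | lra | lra].
have Hth := th_neg k.
rewrite -Hx Hsplit in Hmvt.
split.
  have : lam k * inner (vsub (g xi) (g (x k))) d <= lam k * (eg * Bd).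
    by apply: Rmult_le_compat_l; lra.
  have : lam k * th k <= 0 by nra.
  lra.
move=> Hns; rewrite /succ in Hns.
have : beta * lam k * th k < lam k * (th k + inner (vsub (g xi) (g (x k))) d) by lra.
move=> Hlt.
have : beta * th k < th k + inner (vsub (g xi) (g (x k))) d.
  apply: (Rmult_lt_reg_l (lam k)) => //; lra.
lra.
Qed.

Lemma finish xm : minimizer D f xm -> cv1 (fun k => f (x k)) (f xm) ->
  (forall xs, limit_point x xs -> minimizer D f xs) /\
  (exists fstar, is_inf_on D f fstar /\ Un_cv (fun k => f (x k)) fstar).
Proof.
move=> [Dxm Hxm] Hcv; split.
  move=> xs Hxs; have [Dxs Hf] := lim_point_val HDcl Hgrad _ _ _ Dx Hxs Hcv.
  by split => // z Dz; rewrite Hf; apply: Hxm.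
exists (f xm); split; first by split => // m' Hm'; apply: Hm'.
move=> eps He; have [N HN] := Hcv eps He.
exists N => k Hk; rewrite /R_dist; apply: HN; by apply/leP.
Qed.

Lemma stat_min xs : pseudo_convex_on D f g -> stationary D g xs -> minimizer D f xs.
Proof. move=> Hpc [Dxs Hst]; split => // z Dz; exact: Hpc _ _ Dxs Dz (Hst z Dz). Qed.

Lemma caseA : (exists L, forall k, (lidx k <= L)%N) -> exists xs,
  limit_point x xs /\ stationary D g xs /\ cv1 (fun k => f (x k)) (f xs).
Proof.
move=> [L HL].
have [K HK] : exists K, forall k, (K <= k)%N -> lidx k = lidx K.
  apply: NNPP => Hn.
  have Hgrow : forall m, exists k, (m <= lidx k)%N.
    elim=> [|m [k Hk]]; first by exists 0%N.
    have [k' [Hk' Hne]] : exists k', (k <= k')%N /\ lidx k' <> lidx k.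
      apply: NNPP => H2; apply: Hn; exists k => k' Hk'; apply: NNPP => H3; apply: H2; by exists k'.
    exists k'; have := lidx_mono2 _ _ Hk'; lia.
  have [k Hk] := Hgrow L.+1; have := HL k; lia.
have Hsucc : forall k, (K <= k)%N -> succ k.
  move=> k Hk; apply: NNPP => Hns.
  have [_ [_ [_ [_ Hf]]]] := run_step k.
  move: (proj1 (Hf Hns)); rewrite (HK k.+1 (leqW Hk)) (HK k Hk); lia.
have Hlam : forall m, lam K <= lam (K + m)%N.
  elim=> [|m IH]; first by rewrite addn0; lra.
  have [_ [_ [_ [Hs _]]]] := run_step (K + m)%N.
  have := proj1 (proj2 (Hs (Hsucc _ (leq_addr m K)))); rewrite addnS; lra.
have Hlam' : forall k, (K <= k)%N -> lam K <= lam k.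
  move=> k Hk; rewrite -(subnKC Hk); exact: Hlam.
have Hb := Hbeta.
have Hdec : forall k m, (K <= k)%N -> f (x (k + m)%N) <= f (x k).
  move=> k; elim=> [|m IH] Hk; first by rewrite addn0; lra.
  have := Hsucc (k + m)%N (leq_trans Hk (leq_addr m k)); rewrite /succ addnS.
  have := th_neg (k + m)%N; have := lam_pos (k + m)%N.
  have := IH Hk => h1 h2 h3 h4.
  have : 0 < beta * lam (k + m)%N by apply: Rmult_lt_0_compat; lra.
  nra.
have Hdec' : forall k k', (K <= k)%N -> (k <= k')%N -> f (x k') <= f (x k).
  move=> k k' Hk Hkk'; rewrite -(subnKC Hkk'); exact: Hdec.
have [phi [xs [Hphi [Hxs Dxs]]]] := seq_compact HDcl HDb _ Dx.
have Hlow : forall k, (K <= k)%N -> f xs <= f (x k).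
  move=> k Hk; apply: Rnot_lt_le => Hlt.
  have Hc : 0 < f xs - f (x k) by lra.
  have [d [Hd Hcont]] := f_cont Hgrad xs _ Hc.
  have [N HN] := Hxs d Hd.
  pose j := maxn N k.
  have h1 := Hcont _ (HN j (leq_maxl _ _)).
  have h2 : f (x (phi j)) <= f (x k) by apply: Hdec' => //; have := incr_ge Hphi j; rewrite /j; lia.
  rewrite Rabs_minus_sym in h1; have := Rle_abs (f xs - f (x (phi j))); lra.
have Hcvf : cv1 (fun k => f (x k)) (f xs).
  move=> eps He.
  have [d [Hd Hcont]] := f_cont Hgrad xs _ He.
  have [N HN] := Hxs d Hd.
  pose j := maxn N K.
  have Hj : (K <= phi j)%N by have := incr_ge Hphi j; rewrite /j; lia.
  have h1 := Hcont _ (HN j (leq_maxl _ _)).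
  exists (phi j) => k Hk.
  have h2 := Hdec' _ _ Hj Hk.
  have h3 := Hlow k (leq_trans Hj Hk).
  rewrite Rabs_right; last lra.
  have := Rle_abs (f (x (phi j)) - f xs); lra.
have HlK := lam_pos K.
have Hp : 0 < beta * lam K by apply: Rmult_lt_0_compat; lra.
have Hth : cv1 th 0.
  move=> eps He.
  have Hc : 0 < beta * lam K * eps by apply: Rmult_lt_0_compat.
  have [N HN] := Hcvf _ Hc.
  exists (maxn N K) => k Hk.
  have HkK : (K <= k)%N by lia.
  have h1 := Hsucc k HkK; rewrite /succ in h1.
  have h2 := HN k (leq_trans (leq_maxl _ _) Hk).
  have h3 := Hlow k.+1 (leqW HkK).
  have h4 := Hlam' k HkK.
  have Ht := th_neg k.
  rewrite Rminus_0_r Rabs_left //.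
  have h5 : beta * lam K * (- th k) <= beta * lam k * (- th k).
    apply: Rmult_le_compat_r; first lra.
    apply: Rmult_le_compat_l; lra.
  have h6 := Rle_abs (f (x k) - f xs).
  apply: (Rmult_lt_reg_l (beta * lam K)) => //.
  lra.
have Hst : stationary D g xs.
  apply: (stationary_lim HDcl HDb Hgc (fun j => x (phi j)) (fun j => - th (phi j)) xs (fun j => Dx _) Hxs).
    move=> eps He; have [N HN] := Hth eps He; exists N => j Hj.
    rewrite Rminus_0_r Rabs_Ropp -(Rminus_0_r (th _)); apply: HN; have := incr_ge Hphi j; lia.
  move=> j z Dz; rewrite Ropp_involutive; exact: th_gap.
exists xs; split; first exact: vconv_limit_point Hphi Hxs.
by split.
Qed.

Lemma caseB : ~ (exists L, forall k, (lidx k <= L)%N) -> exists xs,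
  limit_point x xs /\ stationary D g xs /\
  (pseudo_convex_on D f g -> cv1 (fun k => f (x k)) (f xs)).
Proof.
move=> Hunb.
have Hb := Hbeta.
have Hfail : forall N, exists k, (N <= k)%N /\ ~ succ k.
  move=> N; apply: NNPP => Hn; apply: Hunb.
  have Hs : forall k, (N <= k)%N -> succ k.
    move=> k Hk; apply: NNPP => Hk2; apply: Hn; by exists k.
  have Hc : forall m, lidx (N + m)%N = lidx N.
    elim=> [|m IH]; first by rewrite addn0.
    have [_ [_ [_ [Hsc _]]]] := run_step (N + m)%N.
    by rewrite addnS (proj1 (Hsc (Hs _ (leq_addr m N)))).
  exists (lidx N) => k; case: (leqP N k) => Hk.
    by rewrite -(subnKC Hk) Hc.
  apply: lidx_mono2; lia.
have Hlam0 : cv1 lam 0.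
  move=> eps He; have [Nt HNt] := Htau0 eps He.
  have [k0 Hk0] : exists k0, (Nt <= lidx k0)%N.
    apply: NNPP => Hn; apply: Hunb; exists Nt => k; apply: NNPP => Hk; apply: Hn; exists k.
    move/negP: Hk; lia.
  exists k0 => k Hk.
  have Hl := lidx_mono2 _ _ Hk.
  have h : (lidx k >= Nt)%coq_nat by apply/leP; lia.
  have := HNt _ h; rewrite /R_dist Rminus_0_r => h1.
  rewrite Rminus_0_r Rabs_right; last by apply: Rle_ge; apply: Rlt_le; apply: lam_pos.
  have := lam_tau k; have := Rle_abs (tau (lidx k)); lra.
have [psi [Hpsi HPf]] := @extract (fun _ p => ~ succ p) (fun _ N => Hfail N).
have HB := Bd_pos.
have Hthf : cv1 (fun j => th (psi j)) 0.
  move=> eps He.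
  have Heg : 0 < (1 - beta) * eps / (2 * Bd) by apply: Rdiv_lt_0_compat; nra.
  have [del [Hdel Hsb]] := step_bound _ Heg.
  have [N HN] := Hlam0 _ Hdel.
  exists N => j Hj.
  have Hpj : (N <= psi j)%N by have := incr_ge Hpsi j; lia.
  have h1 := HN _ Hpj.
  rewrite Rminus_0_r Rabs_right in h1; last by apply: Rle_ge; apply: Rlt_le; apply: lam_pos.
  have h2 := proj2 (Hsb _ h1) (HPf j).
  have E : (1 - beta) * eps / (2 * Bd) * Bd = (1 - beta) * (eps / 2) by field; lra.
  rewrite E in h2.
  have h3 : - th (psi j) <= eps / 2 by apply: (Rmult_le_reg_l (1 - beta)); lra.
  rewrite Rminus_0_r Rabs_left; [lra | exact: th_neg].
have [phi [xs [Hphi [Hxs Dxs]]]] := seq_compact HDcl HDb (fun j => x (psi j)) (fun j => Dx _).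
have Hst : stationary D g xs.
  apply: (stationary_lim HDcl HDb Hgc (fun j => x (psi (phi j))) (fun j => - th (psi (phi j))) xs (fun j => Dx _) Hxs).
    move=> eps He; have [N HN] := Hthf eps He; exists N => j Hj.
    rewrite Rminus_0_r Rabs_Ropp -(Rminus_0_r (th _)); apply: HN; have := incr_ge Hphi j; lia.
  move=> j z Dz; rewrite Ropp_involutive; exact: th_gap.
exists xs; split; first exact: (vconv_limit_point (incr_comp _ _ Hpsi Hphi) Hxs).
split => // Hpc.
have Hmin : minimizer D f xs := stat_min _ Hpc Hst.
move=> eps He.
have He4 : 0 < eps / 4 by lra.
have [eta [Heta Hopt]] := near_opt HDcl HDb Hgrad Hgc xs Hpc Hmin _ He4.
set eg := (1 - beta) * eta / (2 * Bd).
have Heg : 0 < eg by apply: Rdiv_lt_0_compat; nra.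
have [del [Hdel Hsb]] := step_bound _ Heg.
have EgB : eg * Bd = (1 - beta) * (eta / 2) by rewrite /eg; field; lra.
have Hp : 0 < eg * Bd by apply: Rmult_lt_0_compat.
have Hd2 : 0 < Rmin del (eps / 4 / (eg * Bd)).
  by apply: Rmin_pos => //; apply: Rdiv_lt_0_compat.
have [N1 HN1] := Hlam0 _ Hd2.
have Hlk : forall k, (N1 <= k)%N -> lam k < del /\ lam k * eg * Bd <= eps / 4.
  move=> k Hk; have := HN1 k Hk.
  rewrite Rminus_0_r Rabs_right; last by apply: Rle_ge; apply: Rlt_le; apply: lam_pos.
  move=> h; split; first exact: (Rlt_le_trans _ _ _ h (Rmin_l _ _)).
  have h2 := Rlt_le_trans _ _ _ h (Rmin_r _ _).
  have E : eps / 4 = eps / 4 / (eg * Bd) * (eg * Bd) by field; lra.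
  rewrite Rmult_assoc [X in _ <= X]E; apply: Rmult_le_compat_r; lra.
have Hfk : forall k, (N1 <= k)%N -> ~ succ k -> f (x k.+1) <= f xs + eps / 2.
  move=> k Hk Hns; have [Hl1 Hl2] := Hlk k Hk.
  have [h1 h2] := Hsb k Hl1; have h3 := h2 Hns.
  rewrite EgB in h3.
  have h4 : - th k <= eta / 2 by apply: (Rmult_le_reg_l (1 - beta)); lra.
  have h5 : f (x k) <= f xs + eps / 4.
    apply: Hopt; first exact: Dx.
    move=> z Dz; have := th_gap k z Dz; lra.
  lra.
have [k0 [Hk0 Hf0]] := Hfail N1.
have Hup : forall m, f (x (k0.+1 + m)%N) <= f xs + eps / 2.
  elim=> [|m IH]; first by rewrite addn0; exact: Hfk.
  rewrite addnS.
  case: (classic (succ (k0.+1 + m)%N)) => Hs.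
    rewrite /succ in Hs.
    have := th_neg (k0.+1 + m)%N; have := lam_pos (k0.+1 + m)%N => h1 h2.
    have : 0 < beta * lam (k0.+1 + m)%N by apply: Rmult_lt_0_compat; lra.
    nra.
  apply: Hfk => //; lia.
exists k0.+1 => k Hk.
have h1 := proj2 Hmin _ (Dx k).
have h2 := Hup (k - k0.+1)%N; rewrite subnKC in h2 => //.
rewrite Rabs_right; lra.
Qed.

Lemma main_res : (exists xs, limit_point x xs /\ stationary D g xs) /\
  (pseudo_convex_on D f g ->
     (forall xs, limit_point x xs -> minimizer D f xs) /\
     (exists fstar, is_inf_on D f fstar /\ Un_cv (fun k => f (x k)) fstar)).
Proof.
case: (classic (exists L, forall k, (lidx k <= L)%N)) => H.
  have [xs [H1 [H2 H3]]] := caseA H.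
  split; first by exists xs.
  move=> Hpc; exact: finish (stat_min _ Hpc H2) H3.
have [xs [H1 [H2 H3]]] := caseB H.
split; first by exists xs.
move=> Hpc; exact: finish (stat_min _ Hpc H2) (H3 Hpc).
Qed.

End B.

Theorem theorem3p1 (n : nat) (D : vec n -> Prop) (f : vec n -> R) (f' : vec n -> vec n)
    (beta : R) (tau : nat -> R)
    (x y : nat -> vec n) (lam : nat -> R) (lidx : nat -> nat) :
  (exists z : vec n, D z) -> vconvex D -> vclosed D -> vbounded D ->
  C1_with_gradient f f' ->
  0 < beta < 1 ->
  (forall l, 0 < tau l < 1) -> Un_cv tau 0 ->
  CGMS_run D f f' beta tau x y lam lidx ->
  (exists xs, limit_point x xs /\ stationary D f' xs) /\
  (pseudo_convex_on D f f' ->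
     (forall xs, limit_point x xs -> minimizer D f xs) /\
     (exists fstar, is_inf_on D f fstar /\ Un_cv (fun k => f (x k)) fstar)).
Proof.
move=> _ Hconv Hcl [M HM] [Hgrad Hgc] Hbeta Htau Htau0 Hrun.
eapply main_res; eassumption.
Qed.
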